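(* Let $f\in\mathcal{F}_k$ and let $\bar p$ be the uniform distribution on $\mathcal{Y}$. For all $v\in\mathcal{V}$, $\ell_{\text{abs}}^f(v;\bar p)\ge f([k])$. For all $r\in\mathcal{Y}$, $\ell_{\text{abs}}^f(r;\bar p)=2\bar f$, where $\bar f=2^{-k}\sum_{S\subseteq[k]}f(S)$.
   Context: $[k]=\{1,\dots,k\}$, $\mathcal{Y}=\{-1,1\}^k$, $\mathcal{V}=\{-1,0,1\}^k$. $\mathcal{F}_k$: set functions $f:2^{[k]}\to\mathbb{R}$ that are submodular ($f(S)+f(T)\ge f(S\cup T)+f(S\cap T)$), increasing and normalized ($f(\emptyset)=0$). $\ell_{\text{abs}}^f(v,y)=f(\{i:v_iy_i<0\})+f(\{i:v_iy_i\le0\})$ for $v\in\mathcal{V},y\in\mathcal{Y}$, and $\ell_{\text{abs}}^f(v;p)=\sum_yp_y\ell_{\text{abs}}^f(v,y)$. *)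

(* Defs.v *)
From HB Require Import structures.
From mathcomp Require Import all_boot all_order all_algebra.
Set Implicit Arguments. Unset Strict Implicit. Unset Printing Implicit Defensive.
Import Order.TTheory GRing.Theory Num.Theory.
Local Open Scope ring_scope.

(* [k] is 'I_k; vectors in R^k with integer entries are {ffun 'I_k -> int}. *)

Definition submodular (R : realFieldType) (k : nat) (f : {set 'I_k} -> R) :=
  forall S T : {set 'I_k}, f (S :|: T) + f (S :&: T) <= f S + f T.
Definition increasing_setfun (R : realFieldType) (k : nat) (f : {set 'I_k} -> R) :=
  forall S T : {set 'I_k}, S \subset T -> f S <= f T.
Definition in_F (R : realFieldType) (k : nat) (f : {set 'I_k} -> R) :=
  [/\ submodular f, increasing_setfun f & f set0 = 0].

Definition in_Y (k : nat) (y : {ffun 'I_k -> int}) :=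
  forall i, y i = 1 \/ y i = -1.
Definition in_V (k : nat) (v : {ffun 'I_k -> int}) :=
  forall i, v i = 1 \/ v i = 0 \/ v i = -1.

(* enumeration of Y through bool-vectors: true |-> 1, false |-> -1 *)
Definition signvec (k : nat) (b : {ffun 'I_k -> bool}) : {ffun 'I_k -> int} :=
  [ffun i => if b i then 1 else -1].

Definition labs (R : realFieldType) (k : nat) (f : {set 'I_k} -> R)
  (v y : {ffun 'I_k -> int}) : R :=
  f [set i | v i * y i < 0] + f [set i | v i * y i <= 0].

(* expected loss under the uniform distribution on Y: p_y = 2^{-k} *)
Definition labs_unif (R : realFieldType) (k : nat) (f : {set 'I_k} -> R)
  (v : {ffun 'I_k -> int}) : R :=
  \sum_(b : {ffun 'I_k -> bool}) (2 ^+ k)^-1 * labs f v (signvec b).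

Definition fbar (R : realFieldType) (k : nat) (f : {set 'I_k} -> R) : R :=
  (2 ^+ k)^-1 * \sum_(S : {set 'I_k}) f S.

(* Main.v *)
Require Import Defs.
From HB Require Import structures.
From mathcomp Require Import all_boot all_order all_algebra.
Import Order.TTheory GRing.Theory Num.Theory.
Local Open Scope ring_scope.

Lemma compl_bound {R : realFieldType} {k : nat} {f : {set 'I_k} -> R} (A : {set 'I_k}) :
  in_F f -> f [set: 'I_k] <= f A + f (~: A).
Proof.
case=> sm _ f0; have := sm A (~: A); by rewrite setUCr setICr f0 addr0.
Qed.

Lemma signvec_neg (k : nat) (v : {ffun 'I_k -> int}) (b : {ffun 'I_k -> bool}) :
  ([set i | v i * signvec [ffun j => ~~ b j] i < 0] = ~: [set i | v i * signvec b i <= 0])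
  /\ ([set i | v i * signvec [ffun j => ~~ b j] i <= 0] = ~: [set i | v i * signvec b i < 0]).
Proof.
split; apply/setP => i; rewrite !inE !ffunE; case: (b i) => /=;
  rewrite ?mulr1 ?mulrN1 ?oppr_lt0 ?oppr_le0; by [rewrite ltNge | rewrite leNge | rewrite ltNge negbK | rewrite leNge negbK].
Qed.

Lemma signvec_Y (k : nat) (r : {ffun 'I_k -> int}) (b : {ffun 'I_k -> bool}) :
  in_Y r ->
  ([set i | r i * signvec b i < 0] = [set i | b i != (r i == 1)])
  /\ ([set i | r i * signvec b i <= 0] = [set i | b i != (r i == 1)]).
Proof.
move=> hr; split; apply/setP => i; rewrite !inE !ffunE;
  case: (hr i) => ->; case: (b i) => //.
Qed.

Theorem lemma5 (R : realFieldType) (k : nat) (f : {set 'I_k} -> R) :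
  in_F f ->
  (forall v : {ffun 'I_k -> int}, in_V v -> f [set: 'I_k] <= labs_unif f v) /\
  (forall r : {ffun 'I_k -> int}, in_Y r -> labs_unif f r = 2 * fbar f).
Proof.
move=> hF; split.
- move=> v _; rewrite /labs_unif -mulr_sumr.
  set L := fun b => labs f v (signvec b).
  have hg : injective (fun b : {ffun 'I_k -> bool} => [ffun j => ~~ b j]).
    move=> b1 b2 /ffunP h; apply/ffunP => j; have := h j; rewrite !ffunE.
    by case: (b1 j); case: (b2 j).
  have hs : \sum_(b : {ffun 'I_k -> bool}) L b = \sum_(b : {ffun 'I_k -> bool}) L [ffun j => ~~ b j].
    by rewrite (reindex_inj hg).
  have h2 : 2 * \sum_(b : {ffun 'I_k -> bool}) L b >= \sum_(b : {ffun 'I_k -> bool}) (2 * f [set: 'I_k]).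
    have -> : 2 * \sum_(b : {ffun 'I_k -> bool}) L b = \sum_(b : {ffun 'I_k -> bool}) L b + \sum_(b : {ffun 'I_k -> bool}) L [ffun j => ~~ b j].
      by rewrite -hs mulr_natl mulr2n.
    rewrite -big_split /=.
    apply: ler_sum => b _; rewrite /L /labs.
    have [-> ->] := signvec_neg _ v b.
    rewrite mulrDl mul1r.
    have := compl_bound [set i | v i * signvec b i < 0] hF.
    have := compl_bound [set i | v i * signvec b i <= 0] hF.
    move=> h1 h3; rewrite (addrC (f (~: _)) (f (~: _))) addrACA.
    by apply: lerD.
  rewrite sumr_const card_ffun card_bool card_ord in h2.
  have hp : 0 < (2:R) ^+ k by rewrite exprn_gt0.
  rewrite -(ler_pM2l hp) mulrA divff ?mul1r; last by rewrite gt_eqF.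
  rewrite -(mulr_natr (2 * f [set: 'I_k])) natrX -mulrA ler_pM2l // in h2.
  by rewrite mulrC.
- move=> r hr; rewrite /labs_unif /fbar.
  have -> : \sum_(b : {ffun 'I_k -> bool}) (2 ^+ k)^-1 * labs f r (signvec b) =
      \sum_(b : {ffun 'I_k -> bool}) (2 ^+ k)^-1 * (2 * f [set i | b i != (r i == 1)]).
    apply: eq_bigr => b _; rewrite /labs; have [-> ->] := signvec_Y _ r b hr.
    by rewrite mulr_natl mulr2n.
  rewrite -mulr_sumr -mulr_sumr mulrCA; congr (_ * _); congr (_ * _).
  symmetry; apply: (reindex (fun b : {ffun 'I_k -> bool} => [set i | b i != (r i == 1)])).
  exists (fun T : {set 'I_k} => [ffun i => (i \in T) != (r i == 1)]) => x _.
    by apply/ffunP => i; rewrite !ffunE inE; case: (x i); case: (r i == 1).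
  by apply/setP => i; rewrite !inE ffunE; case: (i \in x); case: (r i == 1).
Qed.
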